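(* Let $\lambda>0$, $\mu>0$ and $0<b<a<1$, and set $\mu_1=\mu$, $\mu_2=a\mu$, $\mu_3=b\mu$. Consider the continuous-time Markov chain $\{(X(t),Y(t)),t\ge 0\}$ on the state space $\{(n,i): n\in\{0,1,2,\dots\},\ i\in\{1,2,3,4\}\}$ whose only transitions are: for $n\ge 1$ and $i\in\{1,2,3\}$, $(n,i)\to(n-1,i+1)$ at rate $\mu_i$ and $(n,i)\to(n+1,i+1)$ at rate $\lambda$; for $i\in\{1,2,3\}$, $(0,i)\to(1,i+1)$ at rate $\lambda$; for $n\ge 0$, $(n,4)\to(n+2,1)$ at rate $\lambda/2$. Define $$g(\lambda)=\frac{\frac{\mu}{\lambda+\mu}+\frac{a\mu}{\lambda+a\mu}+\frac{b\mu}{\lambda+b\mu}+0\cdot\frac{2}{\lambda}}{\frac{1}{\lambda+\mu}+\frac{1}{\lambda+a\mu}+\frac{1}{\lambda+b\mu}+\frac{2}{\lambda}}.$$ If $\lambda<g(\lambda)$, then the system is stable (i.e. the chain is positive recurrent on its recurrent states).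
   Context: This models a single-server queue where $X(t)$ is the number of customers and $Y(t)$ is the server's phase (efficiency level, phase 1 being the most efficient; phases 2, 3 are working vacations with reduced service rates and phase 4 is a regular vacation with no service during which the system waits for two arrivals, modeled as a single jump of $+2$ customers at rate $\lambda/2$). *)

(* Defs.v *)
From HB Require Import structures.
From mathcomp Require Import all_boot all_order all_algebra.
From mathcomp Require Import all_classical all_reals.
From mathcomp Require Import ereal esum.
Set Implicit Arguments. Unset Strict Implicit. Unset Printing Implicit Defensive.
Import Order.TTheory GRing.Theory Num.Theory.
Local Open Scope classical_set_scope.
Local Open Scope ring_scope.
Local Open Scope ereal_scope.

(* Recurrence / positive recurrence are defined through the embedded   *)
(* jump chain, via taboo probabilities (first-return decomposition).   *)
Section CTMC.
Variables (R : realType) (T : choiceType) (q : T -> T -> R).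

Definition out_rate (x : T) : \bar R :=
  \esum_(y in [set y | y != x]) (q x y)%:E.

(* transition probabilities of the jump (embedded) chain; an absorbing
   state (out_rate = 0) stays put *)
Definition jump_prob (x y : T) : R :=
  if out_rate x == 0%E then ((y == x)%:R)%R
  else if y == x then 0%R else (q x y / fine (out_rate x))%R.

Definition mean_holding (x : T) : \bar R :=
  if out_rate x == 0 then +oo else ((fine (out_rate x))^-1)%:E.

(* taboo x j y = P_x(Z_j = y, Z_i <> x for 1 <= i <= j), Z the jump chain *)
Fixpoint taboo (x : T) (j : nat) (y : T) : \bar R :=
  match j with
  | O => ((y == x)%:R)%:E
  | S j' => if y == x then 0
            else \esum_(w in [set: T]) (taboo x j' w * (jump_prob w y)%:E)
  end.

(* P_x(the chain returns to x after leaving it) = sum_k P_x(N = k+1) *)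
Definition return_prob (x : T) : \bar R :=
  \esum_(kw in [set: nat * T]) (taboo x kw.1 kw.2 * (jump_prob kw.2 x)%:E).

(* E_x[T_x^+], T_x^+ = first return time to x (continuous time):
   sum over jump steps j before the return of the mean holding time *)
Definition mean_return_time (x : T) : \bar R :=
  \esum_(jw in [set: nat * T]) (taboo x jw.1 jw.2 * mean_holding jw.2).

Definition recurrent (x : T) : Prop := return_prob x = 1.

Definition positive_recurrent (x : T) : Prop :=
  recurrent x /\ mean_return_time x < +oo.

Definition stable : Prop :=
  (exists x, positive_recurrent x) /\
  (forall x, recurrent x -> positive_recurrent x).

End CTMC.

(* The queue. State (n, i) : nat * 'I_4, where the ordinal i encodes   *)
(* the paper's phase i+1 (so i = 0,1,2 are phases 1,2,3, i = 3 is the  *)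
(* vacation phase 4).                                                  *)
Section Queue.
Variable R : realType.
Local Open Scope ring_scope.

Definition mu_phase (mu a b : R) (i : 'I_4) : R :=
  if val i == 0%N then mu
  else if val i == 1%N then a * mu
  else if val i == 2%N then b * mu
  else 0.

Definition queue_rate (lam mu a b : R) (x y : nat * 'I_4) : R :=
  let: (n, i) := x in
  let: (m, j) := y in
  if (val i < 3)%N then
    if val j == (val i).+1 then
      (if m == n.+1 then lam else 0) +
      (if (0 < n)%N && (m.+1 == n) then mu_phase mu a b i else 0)
    else 0
  else if (val j == 0%N) && (m == n.+2) then lam / 2 else 0.

End Queue.

(* Main.v *)
Require Import Defs.
From HB Require Import structures.
From mathcomp Require Import all_boot all_order all_algebra.
From mathcomp Require Import all_classical all_reals.
From mathcomp Require Import ereal esum.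
From mathcomp Require Import sequences normedtype.
From mathcomp Require Import ring lra.
Import Order.TTheory GRing.Theory Num.Theory.
Local Open Scope ring_scope.
Section EsumAux.
Local Open Scope classical_set_scope.
Local Open Scope ereal_scope.
Context {R : realType}.

Lemma esum_seq (T : choiceType) (f : T -> \bar R) (s : seq T) :
  uniq s -> (forall y, y \notin s -> f y = 0) -> (forall y, 0 <= f y) ->
  \esum_(y in [set: T]) f y = \sum_(y <- s) f y.
Proof.
move=> us fs f0; rewrite (esumID [set` s]) //.
rewrite [X in _ + X]esum1 ?adde0; last first.
  by move=> y [_ /= ys]; apply: fs; apply/negP.
rewrite setTI esum_fset //.
exact/esym/fsbig_seq.
Qed.

Lemma esumZl (T : choiceType) (S : set T) (c : \bar R) (a : T -> \bar R) :
  0 <= c -> (forall i, 0 <= a i) ->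
  \esum_(i in S) (c * a i) = c * \esum_(i in S) a i.
Proof.
move=> c0 a0; case: c c0 => [r| |] //= c0.
- rewrite /esum -ereal_supZl; first last.
  + by rewrite -lee_fin.
  + by apply/set0P; exists 0; exists set0; [exact: fsets_set0| rewrite fsbig_set0].
  rewrite image_comp; congr ereal_sup; apply: eq_imagel => X _ /=.
  by rewrite ge0_mule_fsumr.
- have [e0|] := eqVneq (\esum_(i in S) a i) 0.
  + have ai0 i : S i -> a i = 0.
      move=> Si; apply/eqP; rewrite eq_le a0 andbT -e0.
      apply: esum_ge; exists [set i]; first by split; [exact: finite_set1| move=> ? ->].
      by rewrite fsbig_set1.
    rewrite e0 mule0 esum1 // => i Si; by rewrite ai0 // mule0.
  + move=> ne0.
    have [[i Si ai]|H] := pselect (exists2 i, S i & a i != 0); last first.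
      exfalso; move/negP: ne0; apply; apply/eqP; apply: esum1 => i Si.
      by apply/eqP; apply: contra_notT H => nz; exists i.
    have agt : 0 < a i by rewrite lt_def ai a0.
    have egt : 0 < \esum_(i in S) a i by rewrite lt_def ne0 esum_ge0.
    rewrite gt0_mulye //; apply/eqP; rewrite eq_le leey /=.
    apply: esum_ge; exists [set i]; first by split; [exact: finite_set1| move=> ? ->].
    by rewrite fsbig_set1 gt0_mulye.
Qed.

Lemma esum_swap (T1 T2 : choiceType) (A : set T1) (B : set T2) (f : T1 -> T2 -> \bar R) :
  (forall i j, 0 <= f i j) ->
  \esum_(i in A) \esum_(j in B) f i j = \esum_(j in B) \esum_(i in A) f i j.
Proof.
move=> f0; rewrite !esum_esum //.
rewrite (reindex_esum (A `*`` (fun _ => B)) (B `*`` (fun _ => A)) (fun p => (p.2, p.1))) //.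
split.
- by move=> [i j] /= [].
- by move=> [i j] [i' j'] _ _ /= [-> ->].
- by move=> [j i] /= [Bj Ai]; exists (i, j).
Qed.

Lemma esum_ind (T : choiceType) (x : T) (f : T -> \bar R) :
  (forall y, 0 <= f y) ->
  \esum_(w in [set: T]) (((w == x)%:R)%:E * f w) = f x.
Proof.
move=> f0; rewrite (@esum_seq _ _ [:: x]) //.
- by rewrite big_seq1 eqxx mul1e.
- by move=> y; rewrite inE => /negPf ->; rewrite mul0e.
- by move=> y; apply: mule_ge0 => //; rewrite lee_fin.
Qed.

End EsumAux.
Section Gen.
Local Open Scope ereal_scope.
Context {R : realType} (T : choiceType) (q : T -> T -> R) (supp : T -> seq T) (M : R).
Hypotheses (q0 : forall x y, (0 <= q x y)%R) (qxx : forall x, q x x = 0%R)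
  (usupp : forall x, uniq (supp x))
  (Hsupp : forall x y, y \notin supp x -> q x y = 0%R)
  (rpos : forall x, (0 < \sum_(y <- supp x) q x y)%R)
  (rM : forall x, (\sum_(y <- supp x) q x y <= M)%R).

Local Notation rt x := (\sum_(y <- supp x) q x y)%R.

Lemma out_rateE x : out_rate q x = (rt x)%:E.
Proof.
rewrite /out_rate esum_mkcond (@esum_seq _ _ _ (supp x)) //.
- rewrite -sumEFin; apply: eq_bigr => y _.
  case: ifPn => //; case: (eqVneq y x) => [->|ne H]; first by rewrite qxx.
  by exfalso; move/negP: H; apply; apply/mem_set.
- by move=> y /Hsupp ->; case: ifP.
- by move=> y; case: ifP => // _; rewrite lee_fin.
Qed.

Lemma jump_probE x y : jump_prob q x y = (q x y / rt x)%R.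
Proof.
have rx := rpos x.
rewrite /jump_prob out_rateE eqe (gt_eqF rx) /=.
by case: eqP => [->|//]; rewrite qxx mul0r.
Qed.

Lemma mean_holdingE x : mean_holding q x = ((rt x)^-1)%:E.
Proof. by rewrite /mean_holding out_rateE eqe (gt_eqF (rpos x)). Qed.

Lemma P0 x y : (0 <= jump_prob q x y)%R.
Proof. by rewrite jump_probE divr_ge0 // ltW. Qed.

Lemma sumP x : (\sum_(y <- supp x) jump_prob q x y)%R = 1%R.
Proof.
under eq_bigr do rewrite jump_probE.
by rewrite -mulr_suml divff // gt_eqF.
Qed.

Lemma esum_P x (f : T -> R) : (forall y, 0 <= f y)%R ->
  \esum_(y in [set: T]) ((jump_prob q x y * f y)%:E) =
  (\sum_(y <- supp x) jump_prob q x y * f y)%:E.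
Proof.
move=> f0; rewrite (@esum_seq _ _ _ (supp x)) //.
- by rewrite sumEFin.
- by move=> y /Hsupp; rewrite jump_probE => ->; rewrite mul0r mul0r.
- by move=> y; rewrite lee_fin mulr_ge0 // P0.
Qed.

Variable x : T.

Lemma taboo_ge0 j w : 0 <= taboo q x j w.
Proof.
elim: j w => [|j IH] w /=; first by rewrite lee_fin.
case: ifP => // _; apply: esum_ge0 => v _; apply: mule_ge0 => //.
by rewrite lee_fin P0.
Qed.

Definition A j (g : T -> R) := \esum_(y in [set: T]) (taboo q x j y * (g y)%:E).

Lemma A_S j g : (forall y, 0 <= g y)%R ->
  A j.+1 g = \esum_(w in [set: T]) (taboo q x j w *
     (\sum_(y <- supp w) jump_prob q w y * (if y == x then 0 else g y))%:E).
Proof.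
move=> g0; rewrite /A.
transitivity (\esum_(y in [set: T]) \esum_(w in [set: T])
   (taboo q x j w * (jump_prob q w y * (if y == x then 0 else g y))%:E)).
  apply: eq_esum => y _; rewrite [taboo q x j.+1 y]/=.
  case: ifPn => yx.
    rewrite mul0e esum1 // => w _; by rewrite mulr0 mule0.
  rewrite muleC -esumZl; last first.
  - by move=> w; apply: mule_ge0; [exact: taboo_ge0| rewrite lee_fin P0].
  - by rewrite lee_fin.
  apply: eq_esum => w _.
  by rewrite EFinM [LHS]muleC -muleA.
rewrite esum_swap; last first.
  move=> y w; apply: mule_ge0; first exact: taboo_ge0.
  by rewrite lee_fin mulr_ge0 ?P0 //; case: ifP.
apply: eq_esum => w _; rewrite esumZl ?taboo_ge0 //; last first.
  by move=> y; rewrite lee_fin mulr_ge0 ?P0 //; case: ifP.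
by rewrite esum_P // => y; case: ifP.
Qed.

Lemma esum_ind0 (f : T -> R) : (forall y, 0 <= f y)%R ->
  \esum_(w in [set: T]) (taboo q x 0 w * (f w)%:E) = (f x)%:E.
Proof. by move=> f0; rewrite /= esum_ind // => y; rewrite lee_fin. Qed.

Local Open Scope classical_set_scope.
Local Open Scope ereal_scope.
Definition goodV (V : T -> R) := (forall w, 0 <= V w)%R /\
  forall w, w != x -> ((rt w)^-1 + \sum_(y <- supp w) jump_prob q w y *
                        (if y == x then 0 else V y) <= V w)%R.

Definition H j := \esum_(w in [set: T]) (taboo q x j w * mean_holding q w).

Lemma H_A j : H j = A j (fun w => (rt w)^-1)%R.
Proof. by apply: eq_esum => w _; rewrite mean_holdingE. Qed.

Lemma H_ge0 j : 0 <= H j.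
Proof.
apply: esum_ge0 => w _; rewrite mean_holdingE; apply: mule_ge0; first exact: taboo_ge0.
by rewrite lee_fin invr_ge0 ltW.
Qed.

Lemma A_ge0 j g : (forall w, 0 <= g w)%R -> 0 <= A j g.
Proof.
move=> g0; apply: esum_ge0 => w _; apply: mule_ge0; first exact: taboo_ge0.
by rewrite lee_fin.
Qed.

Definition mm j := A j (fun _ => 1%R).
Definition Rk j := \esum_(w in [set: T]) (taboo q x j w * (jump_prob q w x)%:E).

Lemma Rk_ge0 j : 0 <= Rk j.
Proof.
apply: esum_ge0 => w _; apply: mule_ge0; first exact: taboo_ge0.
by rewrite lee_fin P0.
Qed.

Lemma rowx w : (\sum_(y <- supp w) jump_prob q w y * (if y == x then 0 else 1)
   + jump_prob q w x = 1)%R.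
Proof.
rewrite -[RHS](sumP w); case: (boolP (x \in supp w)) => xs.
  rewrite [in RHS](bigD1_seq x) //= [in LHS](bigD1_seq x) //= eqxx mulr0 add0r addrC.
  congr (_ + _)%R; apply: eq_bigr => y /negPf ->; by rewrite mulr1.
rewrite jump_probE Hsupp // mul0r addr0; apply: eq_big_seq => y ys.
case: eqP => [yx|_]; last by rewrite mulr1.
by move: xs; rewrite -yx ys.
Qed.

Lemma mass j : mm j.+1 + Rk j = mm j.
Proof.
rewrite /mm A_S // /Rk -esumD; first last.
- by move=> w _; apply: mule_ge0; [exact: taboo_ge0| rewrite lee_fin P0].
- move=> w _; apply: mule_ge0; first exact: taboo_ge0.
  by rewrite lee_fin; apply: sumr_ge0 => y _; rewrite mulr_ge0 ?P0 //; case: ifP.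
rewrite /A; apply: eq_esum => w _.
rewrite -ge0_muleDr; last by rewrite lee_fin P0.
  by rewrite -EFinD rowx.
by rewrite lee_fin; apply: sumr_ge0 => y _; rewrite mulr_ge0 ?P0 //; case: ifP.
Qed.

Lemma mm0 : mm 0 = 1.
Proof. by rewrite /mm /A esum_ind0. Qed.

Lemma mm_ge0 j : 0 <= mm j.
Proof. exact: A_ge0. Qed.

Lemma mfin N : \sum_(j < N) Rk j + mm N = 1.
Proof.
elim: N => [|N IH]; first by rewrite big_ord0 add0e mm0.
by rewrite big_ord_recr /= -addeA (addeC (Rk N)) mass.
Qed.

Lemma mm_le1 N : mm N <= 1.
Proof.
rewrite -(mfin N) leeDr //; apply: sume_ge0 => j _; exact: Rk_ge0.
Qed.

Lemma mm_dec j : mm j.+1 <= mm j.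
Proof. by rewrite -(mass j) leeDl // Rk_ge0. Qed.

Lemma mm_mono N j : (j <= N)%N -> mm N <= mm j.
Proof.
elim: N => [|N IH]; first by rewrite leqn0 => /eqP ->.
rewrite leq_eqVlt => /orP[/eqP ->//|]; rewrite ltnS => /IH.
exact: le_trans (mm_dec N).
Qed.

Lemma pos_rec V : goodV V -> positive_recurrent q x.
Proof.
move=> [V0 HV].
set S := fun w => (\sum_(y <- supp w) jump_prob q w y * (if y == x then 0 else V y))%R.
have S0 w : (0 <= S w)%R by apply: sumr_ge0 => y _; rewrite mulr_ge0 ?P0 //; case: ifP.
set K := ((rt x)^-1 + S x)%R.
have hinv0 w : (0 <= (rt w)^-1)%R by rewrite invr_ge0 ltW.
have M0 : (0 < M)%R by apply: lt_le_trans (rpos x) (rM x).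
have base : A 1 V + H 0 = K%:E.
  rewrite A_S // H_A /A esum_ind0 // esum_ind0 //.
  by rewrite addeC -EFinD.
have Hstep j : A j.+2 V + H j.+1 <= A j.+1 V.
  rewrite A_S // H_A /A -esumD; first last.
  - by move=> w _; apply: mule_ge0; [exact: taboo_ge0| rewrite lee_fin; exact: hinv0].
  - by move=> w _; apply: mule_ge0; [exact: taboo_ge0| rewrite lee_fin; exact: S0].
  apply: le_esum => w _.
  rewrite -ge0_muleDr; try by rewrite lee_fin; first [exact: S0 | exact: hinv0].
  case: (eqVneq w x) => [->|wx].
    by rewrite /= eqxx !mul0e.
  apply: lee_wpmul2l; first exact: taboo_ge0.
  rewrite -EFinD lee_fin addrC; exact: HV.
have tele N : \sum_(j < N.+1) H j + A N.+1 V <= K%:E.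
  elim: N => [|N IH]; first by rewrite big_ord1 addeC base.
  rewrite big_ord_recr /= -addeA (addeC (H N.+1)).
  by apply: le_trans IH; apply: leeD => //; exact: Hstep.
have Hle N : \sum_(j < N) H j <= K%:E.
  case: N => [|N]; first by rewrite big_ord0 lee_fin addr_ge0.
  apply: le_trans (tele N); rewrite leeDl //; exact: A_ge0.
have mrt : mean_return_time q x <= K%:E.
  rewrite /mean_return_time.
  have -> : [set: nat * T] = [set: nat] `*`` (fun _ => [set: T]).
    by apply/seteqP; split => -[].
  rewrite -(@esum_esum R nat T setT (fun _ => setT)
             (fun i w => taboo q x i w * mean_holding q w)); last first.
    move=> i w _ _; rewrite mean_holdingE; apply: mule_ge0; first exact: taboo_ge0.
    by rewrite lee_fin.
  rewrite -nneseries_esumT; last exact: H_ge0.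
  apply: lime_le; first by apply: is_cvg_nneseries => n _ _; exact: H_ge0.
  by apply: nearW => n; rewrite big_mkord; exact: Hle.
split; last by apply: le_lt_trans mrt _; exact: ltry.
have Hm j : (M^-1)%:E * mm j <= H j.
  rewrite H_A /mm /A -esumZl; first last.
  - by move=> w; apply: mule_ge0; [exact: taboo_ge0| rewrite lee_fin].
  - by rewrite lee_fin invr_ge0 ltW.
  apply: le_esum => w _; rewrite mule1 muleC.
  apply: lee_wpmul2l; first exact: taboo_ge0.
  by rewrite lee_fin lef_pV2 ?posrE // ?rM.
have mfinN N : mm N = (fine (mm N))%:E.
  rewrite fineK // ge0_fin_numE ?mm_ge0 //; apply: le_lt_trans (mm_le1 N) _; exact: ltry.
have key N : (N%:R * (M^-1 * fine (mm N)) <= K)%R.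
  rewrite -lee_fin; apply: le_trans (Hle N).
  apply: (@le_trans _ _ (\sum_(j < N) ((M^-1)%:E * mm N))).
    rewrite [in X in _ <= X](mfinN N) -EFinM sumEFin lee_fin sumr_const card_ord.
    by rewrite mulr_natl.
  apply: lee_sum => j _; apply: le_trans (Hm j); apply: lee_wpmul2l.
    by rewrite lee_fin invr_ge0 ltW.
  by apply: mm_mono; exact: ltnW (ltn_ord j).
rewrite /recurrent /return_prob.
have -> : [set: nat * T] = [set: nat] `*`` (fun _ => [set: T]).
  by apply/seteqP; split => -[].
rewrite -(@esum_esum R nat T setT (fun _ => setT)
           (fun i w => taboo q x i w * (jump_prob q w x)%:E)); last first.
  by move=> i w _ _; apply: mule_ge0; [exact: taboo_ge0| rewrite lee_fin P0].
rewrite -nneseries_esumT; last exact: Rk_ge0.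
apply/eqP; rewrite eq_le; apply/andP; split.
  apply: lime_le; first by apply: is_cvg_nneseries => n _ _; exact: Rk_ge0.
  apply: nearW => n; rewrite big_mkord -(mfin n) leeDl //; exact: mm_ge0.
apply/lee_addgt0Pr => e e0.
set N := (Num.Def.truncn (M * K / e)).+1.
rewrite -(mfin N); apply: leeD.
  rewrite -(big_mkord xpredT Rk); apply: (@nneseries_lim_ge _ Rk xpredT 0 N) => n _ _; exact: Rk_ge0.
rewrite mfinN lee_fin.
set mN := fine (mm N).
set t := (N%:R : R).
have h1 := key N; rewrite -/mN -/t in h1.
have h2 : (M * K / e < t)%R by exact: truncnS_gt.
have tpos : (0 < t)%R by rewrite /t ltr0Sn.
have cpos : (0 < M^-1)%R by rewrite invr_gt0.
have h2' : (M * K < t * e)%R by rewrite -ltr_pdivrMr.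
have hK : (K < t * (M^-1 * e))%R.
  have := h2'; rewrite -(ltr_pM2l cpos) mulrA (mulVf (lt0r_neq0 M0)) mul1r.
  by rewrite mulrCA.
rewrite leNgt; apply/negP => hlt.
have h3 : (t * (M^-1 * e) < t * (M^-1 * mN))%R by rewrite ltr_pM2l // ltr_pM2l.
have := lt_le_trans (lt_trans hK h3) h1; by rewrite ltxx.
Qed.

Lemma rate_form w (V : T -> R) : (forall y, 0 <= V y)%R ->
  (1 + \sum_(y <- supp w) q w y * V y <= rt w * V w)%R ->
  ((rt w)^-1 + \sum_(y <- supp w) jump_prob q w y * (if y == x then 0 else V y) <= V w)%R.
Proof.
move=> V0 h.
have rw := rpos w.
have e : (\sum_(y <- supp w) jump_prob q w y * (if y == x then 0 else V y)
   = (rt w)^-1 * \sum_(y <- supp w) q w y * (if y == x then 0 else V y))%R.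
  rewrite mulr_sumr; apply: eq_bigr => y _; rewrite jump_probE.
  by rewrite mulrAC mulrC.
rewrite e -{1}(mulr1 (rt w)^-1)%R -mulrDr.
rewrite -(ler_pM2l rw) mulrA mulfV ?gt_eqF // mul1r.
apply: le_trans h; rewrite lerD2l; apply: ler_sum => y _.
by apply: ler_wpM2l => //; case: ifP.
Qed.

End Gen.

Section Propag.
Context {R : realType} (T : choiceType) (q : T -> T -> R) (supp : T -> seq T) (M : R).
Hypotheses (q0 : forall x y, (0 <= q x y)%R) (qxx : forall x, q x x = 0%R)
  (usupp : forall x, uniq (supp x))
  (Hsupp : forall x y, y \notin supp x -> q x y = 0%R)
  (rpos : forall x, (0 < \sum_(y <- supp x) q x y)%R)
  (rM : forall x, (\sum_(y <- supp x) q x y <= M)%R).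

Local Notation rt x := (\sum_(y <- supp x) q x y)%R.
Local Notation P := (jump_prob q).

Lemma propagate z y V : goodV T q supp z V -> (0 < P z y)%R -> y != z ->
  exists V', goodV T q supp y V'.
Proof.
move=> [V0 HV] py yz.
have P0' := P0 T q supp q0 qxx usupp Hsupp rpos.
set Vz := fun u => if u == z then 0%R else V u.
have Vz0 u : (0 <= Vz u)%R by rewrite /Vz; case: ifP.
set S := (\sum_(u <- supp z) P z u * Vz u)%R.
have S0 : (0 <= S)%R by apply: sumr_ge0 => u _; rewrite mulr_ge0.
set C := (((rt z)^-1 + S) / P z y)%R.
have hinv : (0 <= (rt z)^-1)%R by rewrite invr_ge0 ltW.
have C0 : (0 <= C)%R by rewrite divr_ge0 ?addr_ge0 // ltW.
exists (fun u => Vz u + C)%R; split.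
  by move=> u; rewrite addr_ge0.
move=> w wy.
have ys : y \in supp z.
  apply/negPn/negP => /Hsupp qz; move: py; by rewrite (jump_probE T q supp q0 qxx usupp Hsupp rpos) qz mul0r ltxx.
have sumPV u : (\sum_(v <- supp u) P u v * (Vz v + C) =
     \sum_(v <- supp u) P u v * Vz v + C)%R.
  rewrite -[in RHS](mulr1 C) -(sumP T q supp q0 qxx usupp Hsupp rpos u) mulr_sumr -big_split /=.
  by apply: eq_bigr => v _; rewrite mulrDr [C * _]mulrC.
case: (eqVneq w z) => [->|wz].
  have -> : Vz z = 0%R by rewrite /Vz eqxx.
  rewrite add0r [X in _ + X <= _](bigD1_seq y) //= eqxx mulr0 add0r.
  have : (\sum_(v <- supp z | v != y) P z v * (if v == y then 0 else Vz v + C)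
     = \sum_(v <- supp z) P z v * (Vz v + C) - P z y * (Vz y + C))%R.
    rewrite [X in _ = X - _](bigD1_seq y) //= addrAC subrr add0r.
    by apply: eq_bigr => v /negPf ->.
  move=> ->; rewrite sumPV -/S.
  have : (P z y * C = (rt z)^-1 + S)%R by rewrite /C mulrC divfK // gt_eqF.
  have := Vz0 y; have := P0' z y; nra.
have := HV w wz; rewrite -/(Vz) => h.
rewrite /Vz (negPf wz) -/(Vz).
apply: le_trans (_ : (rt w)^-1 + \sum_(v <- supp w) P w v * (Vz v + C) <= _)%R.
  rewrite lerD2l; apply: ler_sum => v _; apply: ler_wpM2l => //.
  by case: ifP => // _; rewrite addr_ge0.
rewrite sumPV addrA lerD2r.
apply: le_trans h; rewrite lerD2l; apply: ler_sum => v _.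
by rewrite /Vz.
Qed.

End Propag.
Section Concrete.
Context {R : realType} (lam mu a b : R).
Hypotheses (hl : 0 < lam) (hm : 0 < mu) (hb : 0 < b) (hba : b < a) (ha1 : a < 1).

Local Notation ST := (nat * 'I_4)%type.
Local Notation qq := (queue_rate lam mu a b).

Definition supq (x : ST) : seq ST := let: (n, i) := x in
  if (i < 3)%N then
    (if (0 < n)%N then [:: (n.+1, inord i.+1 : 'I_4); (n.-1, inord i.+1 : 'I_4)]
     else [:: (n.+1, inord i.+1 : 'I_4)])
  else [:: (n.+2, inord 0 : 'I_4)].

Lemma ha : 0 < a. Proof. exact: lt_trans hba. Qed.

Lemma mu_ge0 i : 0 <= mu_phase mu a b i.
Proof.
have := ha => ha'.
rewrite /mu_phase; case: ifP => _; first exact: ltW.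
case: ifP => _; first by rewrite mulr_ge0 // ltW.
by case: ifP => _ //; rewrite mulr_ge0 // ltW.
Qed.

Lemma mu_gt0 (i : 'I_4) : (i < 3)%N -> 0 < mu_phase mu a b i.
Proof.
have := ha => ha'.
case: i => [[|[|[|k]]] Hk] //= _; rewrite /mu_phase /=; by rewrite ?mulr_gt0.
Qed.

Lemma mu_le (i : 'I_4) : mu_phase mu a b i <= mu.
Proof.
have := ha => ha'.
rewrite /mu_phase; case: ifP => _ //.
case: ifP => _; first by rewrite ler_piMl // ltW.
case: ifP => _; last exact: ltW.
by rewrite ler_piMl // ltW // (lt_trans hba).
Qed.

Lemma q_ge0 x y : 0 <= qq x y.
Proof.
case: x y => n i [m j]; rewrite /queue_rate.
case: ifP => _.
  case: ifP => _ //; apply: addr_ge0; case: ifP => _ //; [exact: ltW| exact: mu_ge0].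
case: ifP => _ //; by rewrite divr_ge0 // ltW.
Qed.

Lemma neq_S2 n : (n.+2 == n) = false. Proof. by elim: n. Qed.
Lemma neq_S1 n : (n.+1 == n) = false. Proof. by elim: n. Qed.

Lemma q_xx x : qq x x = 0.
Proof.
case: x => n i; rewrite /queue_rate.
case: ifP => _; first by rewrite eq_sym neq_S1.
by rewrite [n == _]eq_sym neq_S2 andbF.
Qed.

Lemma inordS (i : 'I_4) : (i < 3)%N -> val (inord i.+1 : 'I_4) = i.+1.
Proof. by move=> h; rewrite /= inordK. Qed.

Lemma inord0v : val (inord 0 : 'I_4) = 0%N.
Proof. by rewrite /= inordK. Qed.

Lemma q_up n (i : 'I_4) : (i < 3)%N -> qq (n, i) (n.+1, inord i.+1) = lam.
Proof.
move=> hi; rewrite /queue_rate hi inordS // eqxx eqxx.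
by rewrite neq_S2 andbF addr0.
Qed.

Lemma q_down n (i : 'I_4) : (i < 3)%N -> (0 < n)%N ->
  qq (n, i) (n.-1, inord i.+1) = mu_phase mu a b i.
Proof.
move=> hi n0; rewrite /queue_rate hi inordS // eqxx n0 prednK // eqxx /=.
case: n n0 {hi} => // n _ /=.
by rewrite eq_sym neq_S2 add0r.
Qed.

Lemma q_vac n (i : 'I_4) : ~~ (i < 3)%N -> qq (n, i) (n.+2, inord 0) = lam / 2.
Proof.
by move=> /negPf hi; rewrite /queue_rate hi inord0v !eqxx.
Qed.

Lemma usupq x : uniq (supq x).
Proof.
case: x => n i /=; case: ifP => _ //; case: ifP => // n0 /=.
rewrite andbT inE; apply/negP => /eqP [].
by case: n n0 => //= n _ /eqP; rewrite neq_S2.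
Qed.

Lemma supq_spec x y : y \notin supq x -> qq x y = 0.
Proof.
case: x y => n i [m j] /=; rewrite /queue_rate.
case: ifP => hi; last first.
  move=> ys; case: ifP => // /andP [/eqP j0 /eqP mn]; exfalso; move/negP: ys; apply.
  have -> : j = inord 0 by apply: val_inj; rewrite inord0v.
  by rewrite mn inE.
move=> ys; case: eqP => // hj.
have ej : j = inord i.+1 by apply: val_inj; rewrite inordS.
subst j.
case: (eqVneq m n.+1) => [em|nm].
  by exfalso; move/negP: ys; apply; rewrite em; case: ifP => _; rewrite !inE eqxx.
rewrite add0r; case: ifP => // /andP [n0 /eqP em].
exfalso; move/negP: ys; apply; rewrite n0 -em /= !inE eqxx orbT.
done.
Qed.

Lemma rt_eq n (i : 'I_4) : \sum_(y <- supq (n, i)) qq (n, i) y =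
  if (i < 3)%N then (if (0 < n)%N then lam + mu_phase mu a b i else lam) else lam / 2.
Proof.
rewrite /supq; case: ifP => hi.
  case: ifP => n0; rewrite !big_cons big_nil ?q_up ?q_down // ?addr0 //.
by rewrite big_cons big_nil q_vac ?hi // addr0.
Qed.

Lemma rt_pos x : 0 < \sum_(y <- supq x) qq x y.
Proof.
case: x => n i; rewrite rt_eq.
case: ifP => hi; last by rewrite divr_gt0.
case: ifP => _ //; by rewrite addr_gt0 // mu_gt0.
Qed.

Lemma rt_le x : \sum_(y <- supq x) qq x y <= lam + mu.
Proof.
case: x => n i; rewrite rt_eq.
case: ifP => hi.
  case: ifP => _; first by rewrite lerD2l mu_le.
  by rewrite lerDl ltW.
apply: le_trans (_ : lam <= _); last by rewrite lerDl ltW.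
by rewrite ler_pdivrMr // ler_pMr // ler1n.
Qed.

Lemma eqle (x y : R) : x = y -> x <= y.
Proof. by move=> ->. Qed.

Definition tau := 1 / (lam + mu) + 1 / (lam + a * mu) + 1 / (lam + b * mu) + 2 / lam.
Definition delta := (lam - mu) / (lam + mu) + (lam - a * mu) / (lam + a * mu)
  + (lam - b * mu) / (lam + b * mu) + 2.
Definition cc := tau / (- delta).
Definition d0 := (1 + cc * (lam - mu)) / (lam + mu).
Definition d1 := (1 + cc * (lam - a * mu)) / (lam + a * mu).
Definition d2 := (1 + cc * (lam - b * mu)) / (lam + b * mu).
Definition d3 := 2 * cc + 2 / lam.
Definition BB := `|d0| + `|d1| + `|d2| + `|d3|.
Definition beta (k : nat) := match k with
  | 0 => BB + d2 + d1 + d0 | 1 => BB + d2 + d1 | 2 => BB + d2 | _ => BB end.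
Definition Vlin (n k : nat) := cc * n%:R + beta k.
Definition V02 := 1 / lam + Vlin 1 3.
Definition V11 := (1 + lam * Vlin 2 2 + a * mu * V02) / (lam + a * mu).
Definition V01 := 1 / lam + Vlin 1 2.
Definition V10 := (1 + lam * Vlin 2 1 + mu * V01) / (lam + mu).
Definition V00 := 1 / lam + V11.
Definition Vf (n k : nat) := match k, n with
  | 0, 0 => V00 | 0, 1 => V10 | 1, 0 => V01 | 1, 1 => V11 | 2, 0 => V02
  | _, _ => Vlin n k end.
Definition Vs (w : ST) := Vf w.1 (val w.2).

Lemma pos_facts : [/\ lam + mu != 0, lam + a * mu != 0, lam + b * mu != 0 & lam != 0].
Proof.
have := ha => ha'.
split; rewrite gt_eqF //; by rewrite ?addr_gt0 ?mulr_gt0.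
Qed.

Lemma delta_neg :
  lam <
    (mu / (lam + mu) + a * mu / (lam + a * mu) + b * mu / (lam + b * mu)
       + 0 * (2 / lam)) /
    (1 / (lam + mu) + 1 / (lam + a * mu) + 1 / (lam + b * mu) + 2 / lam) ->
  delta < 0.
Proof.
have := ha => ha'.
have [f1 f2 f3 f4] := pos_facts.
have Dpos : 0 < 1 / (lam + mu) + 1 / (lam + a * mu) + 1 / (lam + b * mu) + 2 / lam.
  by rewrite !addr_gt0 ?divr_gt0 ?addr_gt0 ?mulr_gt0.
rewrite ltr_pdivlMr // => h.
have -> : delta = lam * (1 / (lam + mu) + 1 / (lam + a * mu) + 1 / (lam + b * mu) + 2 / lam)
  - (mu / (lam + mu) + a * mu / (lam + a * mu) + b * mu / (lam + b * mu) + 0 * (2 / lam)).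
  by rewrite /delta; field; rewrite f1 f2 f3 f4.
by rewrite subr_lt0.
Qed.

Lemma tau_pos : 0 < tau.
Proof.
have := ha => ha'.
by rewrite /tau !addr_gt0 ?divr_gt0 ?addr_gt0 ?mulr_gt0.
Qed.

Section WithHg.
Hypothesis hg : delta < 0.

Lemma cc_ge0 : 0 <= cc.
Proof. by rewrite /cc divr_ge0 // ?oppr_ge0 ltW // tau_pos. Qed.

Lemma hsum : d0 + d1 + d2 + d3 = 0.
Proof.
have [f1 f2 f3 f4] := pos_facts.
have -> : d0 + d1 + d2 + d3 = tau + cc * delta.
  rewrite /d0 /d1 /d2 /d3 /tau /delta; field; by rewrite ?f1 ?f2 ?f3 ?f4.
rewrite /cc; field; exact: ltr0_neq0.
Qed.

Lemma beta_ge0 k : 0 <= beta k.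
Proof.
have := ler_norm (- d0); have := ler_norm (- d1); have := ler_norm (- d2);
have := ler_norm (- d3); rewrite !normrN => h3 h2 h1 h0.
have := normr_ge0 d0; have := normr_ge0 d1; have := normr_ge0 d2;
have := normr_ge0 d3 => g3 g2 g1 g0.
case: k => [|[|[|k]]] /=; rewrite /BB; lra.
Qed.

Lemma Vlin_ge0 n k : 0 <= Vlin n k.
Proof. by rewrite /Vlin addr_ge0 ?beta_ge0 // mulr_ge0 // cc_ge0. Qed.

Lemma Vf_ge0 n k : 0 <= Vf n k.
Proof.
have := ha => ha'.
have i0 : 0 <= 1 / lam by rewrite divr_ge0 // ltW.
have e02 : 0 <= V02 by rewrite /V02 addr_ge0 // Vlin_ge0.
have e01 : 0 <= V01 by rewrite /V01 addr_ge0 // Vlin_ge0.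
have e11 : 0 <= V11.
  rewrite /V11 divr_ge0 ?addr_ge0 ?mulr_ge0 ?Vlin_ge0 // ltW //.
have e10 : 0 <= V10.
  by rewrite /V10 divr_ge0 ?addr_ge0 ?mulr_ge0 ?Vlin_ge0 // ltW // ?addr_gt0.
have e00 : 0 <= V00 by rewrite /V00 addr_ge0.
by case: k => [|[|[|k]]]; case: n => [|[|n]] //=; rewrite Vlin_ge0.
Qed.

Lemma Vs_ge0 w : 0 <= Vs w.
Proof. exact: Vf_ge0. Qed.

Lemma reg0 m : 1 + lam * Vlin m.+2 1 + mu * Vlin m 1 <= (lam + mu) * Vlin m.+1 0.
Proof.
have [f1 f2 f3 f4] := pos_facts.
apply: eqle; rewrite /Vlin /beta /d0 !mulrS; field; by rewrite ?f1.
Qed.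

Lemma reg1 m : 1 + lam * Vlin m.+2 2 + a * mu * Vlin m 2 <= (lam + a * mu) * Vlin m.+1 1.
Proof.
have [f1 f2 f3 f4] := pos_facts.
apply: eqle; rewrite /Vlin /beta /d1 !mulrS; field; by rewrite ?f2.
Qed.

Lemma reg2 m : 1 + lam * Vlin m.+2 3 + b * mu * Vlin m 3 <= (lam + b * mu) * Vlin m.+1 2.
Proof.
have [f1 f2 f3 f4] := pos_facts.
apply: eqle; rewrite /Vlin /beta /d2 !mulrS; field; by rewrite ?f3.
Qed.

Lemma reg3 n : 1 + lam / 2 * Vlin n.+2 0 <= lam / 2 * Vlin n 3.
Proof.
have [f1 f2 f3 f4] := pos_facts.
have e : d0 = - (d1 + d2 + d3) by have := hsum; lra.
apply: eqle; rewrite /Vlin /beta e /d3 !mulrS; field; by rewrite ?f4.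
Qed.

End WithHg.
Lemma sum_reg n (i : 'I_4) : (i < 3)%N -> (0 < n)%N ->
  \sum_(y <- supq (n, i)) qq (n, i) y * Vs y =
  lam * Vf n.+1 i.+1 + mu_phase mu a b i * Vf n.-1 i.+1.
Proof.
move=> hi n0; rewrite /supq hi n0 !big_cons big_nil q_up // q_down // addr0.
by rewrite /Vs /= inordK // ltnS.
Qed.

Lemma sum_0 (i : 'I_4) : (i < 3)%N ->
  \sum_(y <- supq (0, i)) qq (0, i) y * Vs y = lam * Vf 1 i.+1.
Proof.
move=> hi; rewrite /supq hi ltnn !big_cons big_nil q_up // addr0.
by rewrite /Vs /= inordK // ltnS.
Qed.

Lemma sum_3 n (i : 'I_4) : ~~ (i < 3)%N ->
  \sum_(y <- supq (n, i)) qq (n, i) y * Vs y = lam / 2 * Vf n.+2 0.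
Proof.
move=> hi; rewrite /supq (negPf hi) !big_cons big_nil q_vac // addr0.
by rewrite /Vs /= inordK.
Qed.

Lemma drift (hg : delta < 0) w : w != (2, inord 0) ->
  1 + \sum_(y <- supq w) qq w y * Vs y <= (\sum_(y <- supq w) qq w y) * Vs w.
Proof.
have [f1 f2 f3 f4] := pos_facts.
case: w => n i.
case: i => [[|[|[|[|k]]]] Hk] hw; last by [].
- case: n hw => [|[|[|m]]] hw.
  + rewrite sum_0 // rt_eq /Vs /=; apply: eqle; rewrite /V00; field; by rewrite f4.
  + rewrite sum_reg // rt_eq /Vs /mu_phase /= addrA; apply: eqle; rewrite /V10; field; by rewrite f1.
  + exfalso; move: hw; rewrite (_ : Ordinal Hk = inord 0) ?eqxx //.
    by apply: val_inj; rewrite inord0v.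
  + rewrite sum_reg // rt_eq /Vs /mu_phase /= addrA; exact: reg0.
- case: n hw => [|[|m]] hw.
  + rewrite sum_0 // rt_eq /Vs /=; apply: eqle; rewrite /V01; field; by rewrite f4.
  + rewrite sum_reg // rt_eq /Vs /mu_phase /= addrA; apply: eqle; rewrite /V11; field; by rewrite f2.
  + rewrite sum_reg // rt_eq /Vs /mu_phase /= addrA; exact: reg1.
- case: n hw => [|m] hw.
  + rewrite sum_0 // rt_eq /Vs /=; apply: eqle; rewrite /V02; field; by rewrite f4.
  + rewrite sum_reg // rt_eq /Vs /mu_phase /= addrA; exact: reg2.
- rewrite sum_3 // rt_eq /Vs /=; exact: reg3.
Qed.

Lemma good_x0 (hg : delta < 0) : goodV ST qq supq (2, inord 0) Vs.
Proof.
split; first by move=> w; exact: Vs_ge0.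
move=> w hw.
apply: (rate_form ST qq supq q_ge0 q_xx usupq supq_spec rt_pos).
  by move=> y; exact: Vs_ge0.
exact: drift.
Qed.

Definition good (z : ST) := exists V, goodV ST qq supq z V.

Local Notation JE := (jump_probE ST qq supq q_ge0 q_xx usupq supq_spec rt_pos).
Local Notation PROP := (propagate ST qq supq q_ge0 q_xx usupq supq_spec rt_pos).

Lemma up_edge n k : (k < 3)%N -> good (n, inord k) -> good (n.+1, inord k.+1).
Proof.
move=> hk [V hV].
have ek : val (inord k : 'I_4) = k by rewrite /= inordK // ltnW.
have hi : ((inord k : 'I_4) < 3)%N by rewrite ek.
apply: (PROP (n, inord k) _ V hV).
  rewrite JE (_ : (inord k.+1 : 'I_4) = inord (inord k : 'I_4).+1); last by rewrite ek.
  by rewrite q_up // divr_gt0 // rt_pos.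
by rewrite xpair_eqE neq_S1.
Qed.

Lemma down_edge n k : (k < 3)%N -> good (n.+1, inord k) -> good (n, inord k.+1).
Proof.
move=> hk [V hV].
have ek : val (inord k : 'I_4) = k by rewrite /= inordK // ltnW.
have hi : ((inord k : 'I_4) < 3)%N by rewrite ek.
apply: (PROP (n.+1, inord k) _ V hV).
  rewrite JE (_ : (inord k.+1 : 'I_4) = inord (inord k : 'I_4).+1); last by rewrite ek.
  rewrite (_ : n = n.+1.-1) // q_down // divr_gt0 // ?rt_pos //.
  exact: mu_gt0.
by rewrite xpair_eqE eq_sym neq_S1.
Qed.

Lemma vac_edge n : good (n, inord 3) -> good (n.+2, inord 0).
Proof.
move=> [V hV].
have hi : ~~ ((inord 3 : 'I_4) < 3)%N by rewrite /= inordK.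
apply: (PROP (n, inord 3) _ V hV).
  by rewrite JE q_vac // divr_gt0 // ?rt_pos // divr_gt0.
by rewrite xpair_eqE neq_S2.
Qed.

Lemma good0 (hg : delta < 0) m : good (m.+2, inord 0).
Proof.
elim: m => [|m IH]; first by exists Vs; exact: good_x0.
have h1 := up_edge m.+2 0 isT IH.
have h2 := down_edge m.+2 1 isT h1.
have h3 := down_edge m.+1 2 isT h2.
exact: vac_edge m.+1 h3.
Qed.

Lemma good1 (hg : delta < 0) n : good (n.+1, inord 1).
Proof. exact: down_edge n.+1 0 isT (good0 hg n). Qed.

Lemma good2 (hg : delta < 0) n : good (n, inord 2).
Proof. exact: down_edge n 1 isT (good1 hg n). Qed.

Lemma good3 (hg : delta < 0) n : good (n, inord 3).
Proof. exact: down_edge n 2 isT (good2 hg n.+1). Qed.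

Lemma q_to00 w : qq w (0, inord 0) = 0.
Proof.
case: w => n i; rewrite /queue_rate inord0v.
by case: ifP => _ //; rewrite andbF.
Qed.

Lemma q_to10 w : qq w (1, inord 0) = 0.
Proof.
case: w => n i; rewrite /queue_rate inord0v.
by case: ifP => _ //; rewrite andbF.
Qed.

Lemma q_to01 w : w != (1, inord 0) -> qq w (0, inord 1) = 0.
Proof.
case: w => n [i Hi] hw; rewrite /queue_rate /= inordK //.
case: ifP => // hi3; case: i Hi hi3 hw => [|i] Hi hi3 hw //=.
case: n hw => [|[|n]] hw /=; rewrite ?add0r //.
exfalso; move: hw; rewrite (_ : Ordinal Hi = inord 0) ?eqxx //.
by apply: val_inj; rewrite inord0v.
Qed.

Lemma rp_zero (x : ST) : (forall w, qq w x = 0) -> return_prob qq x = 0%E.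
Proof.
move=> h; rewrite /return_prob esum1 // => -[k w] _ /=.
by rewrite JE h mul0r mule0.
Qed.

Lemma rp_zero01 : return_prob qq (0, inord 1) = 0%E.
Proof.
rewrite /return_prob esum1 // => -[k w] _ /=.
case: (eqVneq w (1, inord 0)) => [->|hw]; last by rewrite JE q_to01 // mul0r mule0.
case: k => [|k] /=.
  by rewrite mul0e.
try (case: ifP => _; first by rewrite mul0e).
rewrite esum1 ?mul0e // => v _; by rewrite JE q_to10 mul0r mule0.
Qed.

End Concrete.

Lemma ereal01 {R : realType} : (0%E : \bar R) <> 1%E.
Proof. by move=> /eqP; rewrite eqe eq_sym oner_eq0. Qed.

Theorem theorem1 (R : realType) (lam mu a b : R) :
  0 < lam -> 0 < mu -> 0 < b -> b < a -> a < 1 ->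
  lam <
    (mu / (lam + mu) + a * mu / (lam + a * mu) + b * mu / (lam + b * mu)
       + 0 * (2 / lam)) /
    (1 / (lam + mu) + 1 / (lam + a * mu) + 1 / (lam + b * mu) + 2 / lam) ->
  stable (queue_rate lam mu a b).
Proof.
move=> hl hm hb hba ha1 hg.
have hd := delta_neg lam mu a b hl hm hb hba hg.
have PR : forall x, good lam mu a b x ->
    positive_recurrent (queue_rate lam mu a b) x.
  move=> x [V hV].
  apply: (@pos_rec R _ (queue_rate lam mu a b) supq (lam + mu) _ _ _ _ _ _ x V hV).
  - exact: (q_ge0 _ _ _ _ hl hm hb hba).
  - exact: q_xx.
  - exact: usupq.
  - exact: supq_spec.
  - exact: (rt_pos _ _ _ _ hl hm hb hba).
  - exact: (rt_le _ _ _ _ hl hm hb hba ha1).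
split.
  exists (2, inord 0); apply: PR; exists (Vs lam mu a b); exact: (good_x0 _ _ _ _ hl hm hb hba hd).
move=> [n i] hrec.
case: i hrec => [[|[|[|[|k]]]] Hk] hrec //.
- rewrite (_ : Ordinal Hk = inord 0) in hrec *; last by apply: val_inj; rewrite inord0v.
  case: n hrec => [|[|m]] hrec.
  + exfalso; move: hrec; rewrite /recurrent (rp_zero _ _ _ _ hl hm hb hba).
      exact: ereal01.
    exact: q_to00.
  + exfalso; move: hrec; rewrite /recurrent (rp_zero _ _ _ _ hl hm hb hba).
      exact: ereal01.
    exact: q_to10.
  + apply: PR; exact: (good0 _ _ _ _ hl hm hb hba hd).
- rewrite (_ : Ordinal Hk = inord 1) in hrec *; last by apply: val_inj; rewrite /= inordK.
  case: n hrec => [|m] hrec.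
  + exfalso; move: hrec; rewrite /recurrent (rp_zero01 _ _ _ _ hl hm hb hba).
    exact: ereal01.
  + apply: PR; exact: (good1 _ _ _ _ hl hm hb hba hd).
- rewrite (_ : Ordinal Hk = inord 2) in hrec *; last by apply: val_inj; rewrite /= inordK.
  apply: PR; exact: (good2 _ _ _ _ hl hm hb hba hd).
- rewrite (_ : Ordinal Hk = inord 3) in hrec *; last by apply: val_inj; rewrite /= inordK.
  apply: PR; exact: (good3 _ _ _ _ hl hm hb hba hd).
Qed.
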